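(* For every positive integer $M$ and every real $s>M$, $$\frac{1}{(\pi/2)^M}\int_{\{u\in\mathbb R^M:\ \|u\|_1>s\}}\ \prod_{j=1}^M\frac{du_j}{(1+u_j^2)^2}\le\frac{M}{(s-M)^2}.$$
   Context: Here $\pi=3.14159\ldots$ and $\|u\|_1=\sum_{j=1}^M|u_j|$. *)

(* Defs.v *)
From HB Require Import structures.
From mathcomp Require Import all_boot all_order all_algebra.
From mathcomp Require Import all_classical all_reals all_analysis.
Set Implicit Arguments. Unset Strict Implicit. Unset Printing Implicit Defensive.
Import Order.TTheory GRing.Theory Num.Theory.
Local Open Scope ring_scope.
Local Open Scope ereal_scope.

(* Iterated Lebesgue integral over R^n of a function of the coordinate list
   u = [:: u_1; ...; u_n] (a point of R^n, represented as a seq R of length n):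
   iter_lebesgue n F = \int du_1 ... \int du_n F [:: u_1; ...; u_n].
   For nonnegative measurable F this is the Lebesgue integral over R^n
   (Tonelli); MathComp-Analysis has no n-ary product Lebesgue measure. *)
Fixpoint iter_lebesgue (R : realType) (n : nat) (F : seq R -> \bar R) : \bar R :=
  match n with
  | 0%N => F [::]
  | n'.+1 => \int[@lebesgue_measure R]_x iter_lebesgue n' (fun u => F (x :: u))
  end.

(* Main.v *)
Require Import Defs.
From HB Require Import structures.
From mathcomp Require Import all_boot all_order all_algebra.
From mathcomp Require Import all_classical all_reals all_analysis.
From mathcomp Require Import ring lra.
Import Order.TTheory GRing.Theory Num.Theory.
From mathcomp Require Import measurable_realfun.
Import numFieldNormedType.Exports.
Local Open Scope ring_scope.
Section A.
Context {R : realType}.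
Local Open Scope classical_set_scope.
Lemma lim_h : (fun x : R => x / (1 + x ^+ 2)) x @[x --> +oo] --> (0:R).
Proof.
have hV : (fun x : R => x^-1) x @[x --> +oo] --> (0:R).
  apply/gtr0_cvgV0.
    by near=> y.
  exact: cvg_id.
apply: (@squeeze_cvgr _ _ _ _ (cst 0) (fun x : R => x^-1)) => //; last exact: cvg_cst.
near=> y.
have y0 : 0 < y by near: y; exact: nbhs_pinfty_gt.
apply/andP; split.
  by rewrite /= divr_ge0 ?ltW // ltr_pwDl ?sqr_ge0.
have p : 0 < 1 + y ^+ 2 by rewrite ltr_pwDl ?sqr_ge0.
rewrite /= ler_pdivrMr //.
rewrite mulrDr mulr1 -[y ^+ 2]/(y * y) mulrA mulVf ?gt_eqF // mul1r.
by rewrite lerDr ltW // invr_gt0.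
Unshelve. all: by end_near.
Qed.
Let scE (a x : R) : a *: x = a * x. Proof. by []. Qed.
Let algE (a : R) : a%:A = a. Proof. by rewrite scE mulr1. Qed.
Definition F0 (x : R) : R := (x * (1 + x ^+ 2)^-1 + atan x) / 2.
Lemma F0_lim : F0 x @[x --> +oo] --> (pi / 4 : R).
Proof.
have H := cvgM (cvgD lim_h (@cvgy_atan R)) (cvg_cst (2^-1 : R)).
have -> : (pi / 4 : R) = (0 + pi / 2) * 2^-1.
  by rewrite add0r -mulrA -invfM -natrM.
exact: H.
Qed.
Definition gg (x : R) : R := (1 + x ^+ 2)^-1.

Lemma gg_ge0 x : 0 <= gg x.
Proof. by rewrite /gg invr_ge0 addr_ge0 ?sqr_ge0. Qed.

Lemma gg_cont : continuous gg.
Proof. exact: continuous_oneDsqrV. Qed.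

Lemma int_gg : (\int[lebesgue_measure]_x (gg x)%:E = pi%:E)%E.
Proof.
rewrite ge0_symfun_integralT; last 3 first.
- exact: gg_ge0.
- exact: gg_cont.
- by move=> x; rewrite /gg /= sqrrN.
rewrite -set_itvcy.
rewrite (@ge0_continuous_FTC2y _ gg atan 0 (pi/2)).
- rewrite atan0 sube0 -EFinM; congr EFin; rewrite mulrCA divff ?mulr1 // pnatr_eq0.
- by move=> x _; exact: gg_ge0.
- by apply: continuous_subspaceT; exact: gg_cont.
- exact: cvgy_atan.
- by move=> x _; exact: derivable_atan.
- by apply: cvg_at_right_filter; apply: continuous_atan.
- by move=> x _; rewrite derive1_atan.
Qed.
Lemma F0_der (x : R) : is_derive x 1 F0 (((1 + x ^+ 2) ^+ 2)^-1).
Proof.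
have nz : 1 + x ^+ 2 != 0 by rewrite gt_eqF // ltr_pwDl // sqr_ge0.
have d1 : is_derive x 1 (fun y : R => 1 + y ^+ 2) (2 * x).
  apply: is_derive_eq.
  by rewrite algE add0r mul1r; ring.
have d2 := @is_deriveV _ (fun y => 1 + y ^+ 2) _ _ _ nz d1.
have d3 := is_derive1_atan x.
rewrite /F0.
apply: is_derive_eq.
rewrite !scE; rewrite ?algE; field.
exact: nz.
Qed.
Definition ff (x : R) : R := ((1 + x ^+ 2) ^+ 2)^-1.
Lemma ff_ge0 x : 0 <= ff x.
Proof. by rewrite /ff invr_ge0 exprn_ge0 // addr_ge0 ?sqr_ge0. Qed.
Lemma ff_cont : continuous ff.
Proof.
have -> : ff = (fun x => gg x * gg x).
  by apply/funext => x; rewrite /ff /gg expr2 invfM.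
by move=> x; apply: cvgM; exact: gg_cont.
Qed.
Lemma int_ff : (\int[lebesgue_measure]_x (ff x)%:E = (pi / 2)%:E)%E.
Proof.
rewrite ge0_symfun_integralT; last 3 first.
- exact: ff_ge0.
- exact: ff_cont.
- by move=> x; rewrite /ff /= sqrrN.
rewrite -set_itvcy.
rewrite (@ge0_continuous_FTC2y _ ff F0 0 (pi/4)).
- rewrite /F0 atan0 mul0r add0r mul0r sube0 -EFinM; congr EFin.
  rewrite mulrA [2 * pi]mulrC -mulrA; congr (_ * _).
  by rewrite -[4]/(2 * 2)%:R natrM invfM mulrA divff ?mul1r // pnatr_eq0.
- by move=> x _; exact: ff_ge0.
- by apply: continuous_subspaceT; exact: ff_cont.
- exact: F0_lim.
- by move=> x _; have d := F0_der x; exact: ex_derive.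
- apply: cvg_at_right_filter.
  have d := F0_der 0.
  apply: differentiable_continuous; apply/derivable1_diffP; exact: ex_derive.
- by move=> x _; have d := F0_der x; rewrite derive1E derive_val.
Qed.
Local Notation mu := (@lebesgue_measure R).
Lemma cont_meas (h : R -> R) : continuous h -> measurable_fun [set: measurableTypeR R] (EFin \o h).
Proof. by move=> ch; apply/measurable_EFinP; exact: continuous_measurable_fun. Qed.

Lemma gg_int : mu.-integrable setT (fun x => (gg x)%:E).
Proof.
apply/integrableP; split; first exact: (cont_meas _ gg_cont).
under eq_integral do rewrite gee0_abs ?lee_fin ?gg_ge0//.
by rewrite int_gg ltey.
Qed.

Lemma dom_int (h : R -> R) : continuous h -> (forall x, `|h x| <= gg x) ->
  mu.-integrable setT (fun x => (h x)%:E).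
Proof.
move=> ch hle; apply: le_integrable gg_int => //.
  exact: (cont_meas _ ch).
move=> x _ /=; rewrite lee_fin (ger0_norm (gg_ge0 x)); exact: hle.
Qed.

Lemma ff_le x : ff x <= gg x.
Proof.
have := gg_ge0 x; have := oneDsqrV_le1 x.
rewrite /ff /gg expr2 invfM => h1 h0; exact: ler_piMr.
Qed.

Lemma gg_pos x : 0 < gg x.
Proof. by rewrite /gg invr_gt0 ltr_pwDl ?sqr_ge0. Qed.
Lemma gg_eq x : gg x * (1 + x ^+ 2) = 1.
Proof. by rewrite /gg mulVf // gt_eqF // ltr_pwDl ?sqr_ge0. Qed.
Lemma ffE x : ff x = gg x ^+ 2.
Proof. by rewrite /ff /gg exprVn. Qed.

Definition f1 (x : R) : R := `|x| * ff x.
Definition f2 (x : R) : R := x ^+ 2 * ff x.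

Lemma f1_cont : continuous f1.
Proof. move=> x; apply: cvgM; [exact: norm_continuous | exact: ff_cont]. Qed.
Lemma f2_cont : continuous f2.
Proof. move=> x; apply: cvgM; [exact: exprn_continuous | exact: ff_cont]. Qed.

Lemma ff_intg : mu.-integrable setT (fun x => (ff x)%:E).
Proof.
apply: dom_int; first exact: ff_cont.
by move=> x; rewrite ger0_norm ?ff_ge0 ?ff_le.
Qed.
Lemma f1_intg : mu.-integrable setT (fun x => (f1 x)%:E).
Proof.
apply: dom_int; first exact: f1_cont.
move=> x; rewrite /f1 ffE normrM normr_id (ger0_norm (exprn_ge0 _ (ltW (gg_pos x)))).
have h1 := gg_eq x; have h2 := gg_pos x; have h3 := normr_ge0 x.
have h4 : `|x| ^+ 2 = x ^+ 2 by rewrite real_normK ?num_real.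
have h5 : 0 <= 1 + x ^+ 2 - `|x| by nra.
have h6 : 0 <= gg x * (1 + x ^+ 2 - `|x|) by rewrite mulr_ge0 // ltW.
have h7 : `|x| * gg x <= 1 by nra.
have h8 : 0 <= gg x * (1 - `|x| * gg x) by rewrite mulr_ge0 ?subr_ge0 // ltW.
nra.
Qed.
Lemma f2_intg : mu.-integrable setT (fun x => (f2 x)%:E).
Proof.
apply: dom_int; first exact: f2_cont.
move=> x; rewrite /f2 ffE normrM (ger0_norm (sqr_ge0 x)) (ger0_norm (exprn_ge0 _ (ltW (gg_pos x)))).
have h1 := gg_eq x; have h2 := gg_pos x; have h3 := sqr_ge0 x.
nra.
Qed.

Lemma int_f2 : (\int[mu]_x (f2 x)%:E = (pi / 2)%:E)%E.
Proof.
have E : (\int[mu]_x (gg x)%:E = \int[mu]_x ((ff x)%:E + (f2 x)%:E))%E.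
  apply: eq_integral => x _; rewrite -EFinD; congr EFin.
  rewrite /f2 ffE; have h1 := gg_eq x; nra.
rewrite (integralD measurableT ff_intg f2_intg) in E.
rewrite int_gg int_ff in E.
have /fineK F := integrable_fin_num (measurableT) f2_intg.
rewrite -F in E *; congr EFin.
move: E; rewrite -EFinD => -[E]; lra.
Qed.

Definition I1 : R := fine (\int[mu]_x (f1 x)%:E).

Lemma I1E : (\int[mu]_x (f1 x)%:E = I1%:E)%E.
Proof. by rewrite /I1 fineK // (integrable_fin_num measurableT f1_intg). Qed.
Lemma I1_ge0 : 0 <= I1.
Proof. by rewrite -lee_fin -I1E integral_ge0 // => x _; rewrite lee_fin /f1 mulr_ge0 ?ff_ge0. Qed.

Lemma I1_le : I1 <= pi / 2.
Proof.
have H : (\int[mu]_x ((2 * f1 x)%:E) <= \int[mu]_x ((ff x)%:E + (f2 x)%:E))%E.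
  apply: le_integral => //.
  - under eq_fun do rewrite EFinM. exact: integrableZl f1_intg.
  - exact: integrableD ff_intg f2_intg.
  move=> x _; rewrite -EFinD lee_fin /f1 /f2 ffE.
  have h2 := gg_pos x; have h3 := normr_ge0 x.
  have h4 : `|x| ^+ 2 = x ^+ 2 by rewrite real_normK ?num_real.
  have h5 : 0 <= gg x ^+ 2 * (1 - `|x|) ^+ 2 by rewrite mulr_ge0 ?sqr_ge0.
  nra.
move: H; under eq_integral do rewrite EFinM.
rewrite (integralZl measurableT f1_intg) I1E (integralD measurableT ff_intg f2_intg) int_ff int_f2.
rewrite -EFinM -EFinD lee_fin; lra.
Qed.

Lemma int_comb (a b c : R) :
  (\int[mu]_x (((a + b * `|x| + c * x ^+ 2) * ff x)%:E) =
   (a * (pi / 2) + b * I1 + c * (pi / 2))%:E)%E.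
Proof.
have E : forall x, (((a + b * `|x| + c * x ^+ 2) * ff x)%:E =
   (a%:E * (ff x)%:E + b%:E * (f1 x)%:E) + c%:E * (f2 x)%:E)%E.
  by move=> x; rewrite -!EFinM -!EFinD /f1 /f2; congr EFin; ring.
under eq_integral do rewrite E.
have i1 := integrableZl measurableT a ff_intg.
have i2 := integrableZl measurableT b f1_intg.
have i3 := integrableZl measurableT c f2_intg.
rewrite (integralD measurableT (integrableD measurableT i1 i2) i3).
rewrite (integralD measurableT i1 i2).
rewrite (integralZl measurableT ff_intg) (integralZl measurableT f1_intg) (integralZl measurableT f2_intg) I1E int_ff int_f2.
by rewrite -!EFinM -!EFinD.
Qed.
Definition P (u : seq R) : R := \prod_(x <- u) ((1 + x ^+ 2) ^+ 2)^-1.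
Definition S (u : seq R) : R := \sum_(x <- u) `|x|.
Definition p : R := pi / 2.

Fixpoint ABC (n : nat) : R * R * R :=
  match n with
  | 0%N => (1, 0, 0)
  | n'.+1 => let: (A, B, C) := ABC n' in
     (p * A, I1 * A + p * B, p * A + 2 * I1 * B + p * C)
  end.

Lemma iterP n : forall a b c : R,
  iter_lebesgue n (fun u => (P u * (a + b * S u + c * S u ^+ 2))%:E) =
  (a * (ABC n).1.1 + b * (ABC n).1.2 + c * (ABC n).2)%:E.
Proof.
elim: n => [|n IH] a b c.
  by rewrite /= /P /S !big_nil; congr EFin; ring.
rewrite /=.
have E : forall x, iter_lebesgue n
    (fun u => (P (x :: u) * (a + b * S (x :: u) + c * S (x :: u) ^+ 2))%:E) =
   (((a * (ABC n).1.1 + b * (ABC n).1.2 + c * (ABC n).2) +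
     (b * (ABC n).1.1 + 2 * c * (ABC n).1.2) * `|x| +
     c * (ABC n).1.1 * x ^+ 2) * ff x)%:E.
  move=> x.
  have -> : (fun u => (P (x :: u) * (a + b * S (x :: u) + c * S (x :: u) ^+ 2))%:E) =
    (fun u => (P u * (ff x * (a + b * `|x| + c * `|x| ^+ 2) +
                      ff x * (b + 2 * c * `|x|) * S u + ff x * c * S u ^+ 2))%:E).
    apply/funext => u; rewrite /P /S !big_cons /ff; congr EFin; ring.
  rewrite IH; congr EFin.
  have -> : `|x| ^+ 2 = x ^+ 2 by rewrite real_normK ?num_real.
  ring.
under eq_integral do rewrite E.
rewrite int_comb.
case: (ABC n) => [[A B] C] /=; congr EFin; rewrite /p; ring.
Qed.
Lemma p_gt0 : 0 < p.
Proof. by rewrite /p divr_gt0 ?pi_gt0. Qed.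

Definition q : R := I1 / p.

Lemma ABCE n : ABC n = (p ^+ n, n%:R * q * p ^+ n,
   p ^+ n * (n%:R + n%:R * (n%:R - 1) * q ^+ 2)).
Proof.
have pn : p != 0 by rewrite gt_eqF // p_gt0.
have I1q : I1 = q * p by rewrite /q divfK.
elim: n => [|n IH]; first by rewrite /= expr0; congr (_, _, _); ring.
rewrite /= IH I1q -!natr1 !exprS; congr (_, _, _); ring.
Qed.

Lemma le_int_nm (f g : R -> \bar R) : (forall x, 0 <= f x)%E ->
  (forall x, f x <= g x)%E -> (\int[mu]_x f x <= \int[mu]_x g x)%E.
Proof.
move=> f0 fg.
have g0 : forall x, (0 <= g x)%E by move=> x; apply: le_trans (f0 x) (fg x).
rewrite ge0_integralE; last by move=> x _; exact: f0.
rewrite [X in (_ <= X)%E]ge0_integralE; last by move=> x _; exact: g0.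
rewrite !patch_setT.
apply: ereal_sup_le => y [h hf <-]; exists h => //= x.
exact: le_trans (hf x) (fg x).
Qed.

Lemma iter_ge0 n : forall F : seq R -> \bar R, (forall u, 0 <= F u)%E ->
  (0 <= iter_lebesgue n F)%E.
Proof.
elim: n => [|n IH] F F0 //=.
by apply: integral_ge0 => x _; apply: IH => u.
Qed.

Lemma iter_le n : forall F G : seq R -> \bar R, (forall u, 0 <= F u)%E ->
  (forall u, F u <= G u)%E -> (iter_lebesgue n F <= iter_lebesgue n G)%E.
Proof.
elim: n => [|n IH] F G F0 FG //=.
apply: le_int_nm => x; first by apply: iter_ge0.
by apply: IH.
Qed.
End A.

Theorem lemma4 (R : realType) (M : nat) (s : R) :
  (0 < M)%N -> M%:R < s ->
  (((pi / 2) ^- M)%:E *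
     iter_lebesgue M
       (fun u : seq R =>
          (if s < \sum_(x <- u) `|x| then \prod_(x <- u) ((1 + x ^+ 2) ^+ 2)^-1
           else 0)%:E) <= (M%:R / (s - M%:R) ^+ 2)%:E)%E.
Proof.
move=> M0 Ms.
have q0 : 0 <= @q R by rewrite /q divr_ge0 ?I1_ge0 // ltW // p_gt0.
have q1 : @q R <= 1 by rewrite /q ler_pdivrMr ?p_gt0 // mul1r I1_le.
set c0 := M%:R * @q R.
have M0' : (0 : R) <= M%:R by rewrite ler0n.
have c0M : c0 <= M%:R by rewrite /c0 ler_piMr.
have sM : 0 < s - M%:R by rewrite subr_gt0.
have sc : s - M%:R <= s - c0 by rewrite lerD2l lerN2.
have sc0 : 0 < s - c0 by apply: lt_le_trans sc.
set d := (s - c0) ^+ 2.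
have d0 : 0 < d by rewrite /d exprn_gt0.
have H1 : (iter_lebesgue M
       (fun u : seq R =>
          (if s < \sum_(x <- u) `|x| then \prod_(x <- u) ((1 + x ^+ 2) ^+ 2)^-1
           else 0)%:E) <=
   iter_lebesgue M (fun u => (P u * (c0 ^+ 2 / d + (- 2 * c0 / d) * S u + d^-1 * S u ^+ 2))%:E))%E.
  apply: iter_le => u.
    case: ifP => _; rewrite lee_fin //.
    by apply: prodr_ge0 => x _; rewrite invr_ge0 exprn_ge0 // addr_ge0 ?sqr_ge0.
  have P0 : 0 <= P u.
    by apply: prodr_ge0 => x _; rewrite invr_ge0 exprn_ge0 // addr_ge0 ?sqr_ge0.
  have -> : c0 ^+ 2 / d + (- 2 * c0 / d) * S u + d^-1 * S u ^+ 2 = (S u - c0) ^+ 2 / d.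
    by field; rewrite gt_eqF.
  rewrite lee_fin; case: ifP => Hs.
    rewrite -[X in X <= _]mulr1; apply: ler_wpM2l => //.
    rewrite ler_pdivlMr // mul1r /d.
    have h : s - c0 <= S u - c0 by rewrite lerD2r ltW.
    nra.
  by rewrite mulr_ge0 // divr_ge0 ?sqr_ge0 // ltW.
rewrite iterP ABCE /= in H1.
apply: le_trans (lee_wpmul2l _ H1) _.
  by rewrite lee_fin invr_ge0 exprn_ge0 // ltW // -/(@p R) p_gt0.
rewrite -EFinM lee_fin -/(@p R).
have pM : p ^+ M != 0 :> R by rewrite expf_neq0 // gt_eqF // p_gt0.
have -> : p ^- M * (c0 ^+ 2 / d * p ^+ M + - 2 * c0 / d * (M%:R * q * p ^+ M) +
     d^-1 * (p ^+ M * (M%:R + M%:R * (M%:R - 1) * q ^+ 2))) =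
   (M%:R - M%:R * q ^+ 2) / d.
  rewrite /c0; field; rewrite pM gt_eqF //.
apply: le_trans (_ : M%:R / d <= _).
  by rewrite ler_pM2r ?invr_gt0 // gerDl oppr_le0 mulr_ge0 ?sqr_ge0.
rewrite ler_pM2l ?ltr0n // lef_pV2 ?posrE ?exprn_gt0 // /d.
nra.
Qed.
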